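(* Let $p>2$ be prime, $\mathcal{C}$ a $\mathbb{Z}_p\mathbb{Z}_{p^2}$-additive code and $C=\Phi(\mathcal{C})$. If $\mathbf{x}_1,\ldots,\mathbf{x}_n\in\mathcal{C}$ satisfy $\Phi(\mathbf{x}_1)+\Phi(\mathbf{x}_2)+\cdots+\Phi(\mathbf{x}_n)\in K(C)$, then $\Phi(\mathbf{x}_1+\mathbf{x}_2+\cdots+\mathbf{x}_n)\in K(C)$.
   Context: A $\mathbb{Z}_p\mathbb{Z}_{p^2}$-additive code is a subgroup $\mathcal{C}$ of $\mathbb{Z}_p^\alpha\times\mathbb{Z}_{p^2}^\beta$. The Gray map $\phi:\mathbb{Z}_{p^2}\to\mathbb{Z}_p^p$ is $\phi(\theta)=\theta''(1,\ldots,1)+\theta'(0,1,\ldots,p-1)$ with $\theta=\theta''p+\theta'$, $\theta',\theta''\in\{0,\ldots,p-1\}$, and $\Phi(\mathbf{x},\mathbf{y})=(\mathbf{x},\phi(y_1),\ldots,\phi(y_\beta))$. For $C\subseteq\mathbb{Z}_p^n$, $K(C)=\{\mathbf{x}\in\mathbb{Z}_p^n\mid C+\mathbf{x}=C\}$. *)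

(* Defs.v *)
From HB Require Import structures.
From mathcomp Require Import all_boot all_order all_algebra.
Set Implicit Arguments. Unset Strict Implicit. Unset Printing Implicit Defensive.
Import GRing.Theory.
Local Open Scope ring_scope.

(* Ambient group Z_p^alpha x Z_{p^2}^beta (p > 2 prime, so 'Z_p and 'Z_(p^2)
   are the genuine rings Z/pZ and Z/p^2Z). *)
Notation ZZ p alpha beta :=
  ('rV['Z_p]_alpha * 'rV['Z_(p ^ 2)]_beta)%type.

Definition additive_code (p alpha beta : nat) (C : {set ZZ p alpha beta}) : Prop :=
  0 \in C /\ (forall x y, x \in C -> y \in C -> x - y \in C).

(* Gray map phi : Z_{p^2} -> Z_p^p,
   phi(theta) = theta''(1,...,1) + theta'(0,1,...,p-1), theta = theta'' p + theta'. *)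
Definition gray (p : nat) (theta : 'Z_(p ^ 2)) : 'rV['Z_p]_p :=
  \row_(j < p) (((val theta %/ p)%N + (val theta %% p)%N * j)%:R : 'Z_p).

Arguments gray : clear implicits.

(* Phi(x, y) = (x, phi(y_1), ..., phi(y_beta)) in Z_p^(alpha + p beta). *)
Definition Phi (p alpha beta : nat) (v : ZZ p alpha beta)
  : 'rV['Z_p]_(alpha + beta * p) :=
  row_mx v.1 (mxvec (\matrix_(i < beta, j < p) gray p (v.2 0 i) 0 j)).

Definition kernel (p n : nat) (C : {set 'rV['Z_p]_n}) : {set 'rV['Z_p]_n} :=
  [set x | [set c + x | c in C] == C].

(* Main.v *)
Require Import Defs.
From HB Require Import structures.
From mathcomp Require Import all_boot all_order all_algebra.
From mathcomp Require Import ring zify.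
Import GRing.Theory.
Set Implicit Arguments. Unset Strict Implicit.
Local Open Scope ring_scope.

Section Aux.

Variable p : nat.
Hypothesis hp : (1 < p)%N.

Lemma natr_modp k : ((k %% p)%N%:R : 'Z_p) = k%:R.
Proof. by rewrite {2}(divn_eq k p) natrD natrM pchar_Zp // mulr0 add0r. Qed.

Lemma hq : (1 < p ^ 2)%N.
Proof. by rewrite (@leq_trans p) // -{1}(expn1 p) leq_pexp2l // ltnW. Qed.

Lemma valZ2_add (a b : 'Z_(p^2)) : val (a + b) = ((val a + val b) %% p^2)%N.
Proof.
have -> : a + b = (val a + val b)%N%:R by rewrite natrD !natr_Zp.
exact: (val_Zp_nat hq).
Qed.

Lemma grayE (t : 'Z_(p^2)) (j : 'I_p) :
  gray p t 0 j = (val t %/ p)%N%:R + (val t %% p)%N%:R * (nat_of_ord j)%:R.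
Proof. by rewrite /gray mxE natrD natrM. Qed.

Lemma gray_add (a b : 'Z_(p^2)) (hb : (p %| val b)%N) (j : 'I_p) :
  gray p (a + b) 0 j = gray p a 0 j + gray p b 0 j.
Proof.
rewrite !grayE valZ2_add; move: (val a) (val b) hb => A B hB.
have p0 : (0 < p)%N by apply: ltnW.
rewrite -[(p ^ 2)%N]mulnn -modn_divl natr_modp.
have E : forall x, ((x %% p ^ 2) %% p = x %% p)%N.
  by move=> x; rewrite modn_dvdm // expnS dvdn_mulr.
rewrite E.
case/dvdnP: hB => b1 ->.
rewrite mulnK // modnMl mul0r addr0 addnC divnMDl // addnC modnMDl natrD.
ring.
Qed.


Lemma gray_diff (t : 'Z_(p^2)) :
  gray p t 0 (Ordinal hp) - gray p t 0 (Ordinal (ltnW hp)) = (val t)%:R.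
Proof. by rewrite !grayE /= mulr1 mulr0 addr0 addrC addKr natr_modp. Qed.

Lemma f_add (a b : 'Z_(p^2)) :
  ((val (a + b))%:R : 'Z_p) = (val a)%:R + (val b)%:R.
Proof.
rewrite valZ2_add -natr_modp modn_dvdm ?natr_modp ?natrD //.
by rewrite expnS dvdn_mulr.
Qed.

Lemma f0_dvd (t : 'Z_(p^2)) : ((val t)%:R : 'Z_p) = 0 -> (p %| val t)%N.
Proof.
move=> h; have := congr1 (@nat_of_ord _) h; rewrite (val_Zp_nat hp) /= => e.
by rewrite /dvdn e.
Qed.

Variables alpha beta : nat.

Lemma Phi_l (v : ZZ p alpha beta) k : Phi v 0 (lshift _ k) = v.1 0 k.
Proof. by rewrite /Phi row_mxEl. Qed.

Lemma Phi_r (v : ZZ p alpha beta) i j :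
  Phi v 0 (rshift _ (mxvec_index i j)) = gray p (v.2 0 i) 0 j.
Proof. by rewrite /Phi row_mxEr mxvecE mxE. Qed.

Lemma Phi_add (u v : ZZ p alpha beta) : v.1 = 0 ->
  (forall i, (p %| val (v.2 0%R i))%N) -> Phi (u + v) = Phi u + Phi v.
Proof.
move=> h1 h2; apply/rowP => k.
rewrite [RHS]mxE -(splitK k); case: (split k) => k' /=.
  by rewrite !Phi_l /= h1 !mxE addr0.
case/(mxvec_indexP): k' => i j.
by rewrite !Phi_r /= [(u.2 + v.2) 0 i]mxE gray_add.
Qed.

Lemma Phi0 : Phi (0 : ZZ p alpha beta) = 0.
Proof.
apply/rowP => k; rewrite [RHS]mxE -(splitK k); case: (split k) => k' /=.
  by rewrite Phi_l /= !mxE.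
case/(mxvec_indexP): k' => i j.
rewrite Phi_r grayE /= !mxE /=. by rewrite div0n mod0n mul0r addr0.
Qed.

Lemma sum_fst n (x : 'I_n -> ZZ p alpha beta) :
  (\sum_(i < n) x i).1 = \sum_(i < n) (x i).1.
Proof. by apply: (big_morph fst) => //. Qed.

Lemma sum_snd n (x : 'I_n -> ZZ p alpha beta) :
  (\sum_(i < n) x i).2 = \sum_(i < n) (x i).2.
Proof. by apply: (big_morph snd) => //. Qed.

End Aux.

Theorem lemma10 (p : nat) (hp : prime p) (hp2 : (2 < p)%N) (alpha beta : nat)
  (C : {set ZZ p alpha beta}) (hC : additive_code C)
  (n : nat) (x : 'I_n -> ZZ p alpha beta) (hx : forall i, x i \in C) :
  \sum_(i < n) Phi (x i) \in kernel [set Phi c | c in C] ->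
  Phi (\sum_(i < n) x i) \in kernel [set Phi c | c in C].
Proof.
have hp1 : (1 < p)%N by apply: ltnW.
case: hC => C0 CB.
have CN : forall a, a \in C -> - a \in C by move=> a ha; rewrite -sub0r CB.
have CD : forall a b, a \in C -> b \in C -> a + b \in C.
  by move=> a b ha hb; rewrite -(opprK b) CB ?CN.
have CS : \sum_(i < n) x i \in C.
  by apply: (big_ind (fun y => y \in C)) => // i _; apply: hx.
set D := [set Phi c | c in C].
set s := \sum_(i < n) Phi (x i).
set S := \sum_(i < n) x i.
rewrite /kernel inE => /eqP hs.
have : Phi 0 + s \in D by rewrite -hs; apply: imset_f; apply: imset_f.
rewrite Phi0 add0r => /imsetP [z zC hz].
set d := S - z.
have dC : d \in C by rewrite CB.
have hd1 : d.1 = 0.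
  apply/rowP => k; rewrite !mxE /= sum_fst summxE.
  have := congr1 (fun r : 'rV['Z_p]_(alpha + beta * p) => r 0 (lshift (beta * p) k)) hz.
  rewrite /= summxE Phi_l => <-; apply/eqP; rewrite subr_eq0; apply/eqP.
  by apply: eq_bigr => i _; rewrite Phi_l.
have hd2 : forall i, (p %| val (d.2 0%R i))%N.
  move=> i. apply: (f0_dvd hp1).
  have e1 := congr1 (fun r : 'rV['Z_p]_(alpha + beta * p) => r 0 (rshift alpha (mxvec_index i (Ordinal hp1)))
     - r 0 (rshift alpha (mxvec_index i (Ordinal (ltnW hp1))))) hz.
  move: e1; rewrite /= !summxE -sumrB !Phi_r gray_diff.
  under eq_bigr do rewrite !Phi_r gray_diff.
  have fS : ((val (S.2 0 i))%:R : 'Z_p) = \sum_(k < n) (val ((x k).2 0 i))%:R.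
    rewrite /S sum_snd summxE.
    apply: (big_morph (fun t : 'Z_(p^2) => ((val t)%:R : 'Z_p))) => //.
    exact: f_add.
  rewrite -fS => e1.
  have : S.2 0 i = d.2 0 i + z.2 0 i by rewrite /d /= !mxE subrK.
  move/(congr1 (fun t : 'Z_(p^2) => ((val t)%:R : 'Z_p))).
  by rewrite f_add // e1 => h; apply: (addIr ((val (z.2 0 i))%:R)); rewrite -h add0r.
have hS : Phi S = Phi z + Phi d by rewrite -Phi_add // /d addrC subrK.
rewrite inE eqEcard (card_imset _ (addIr _)) leqnn andbT.
apply/subsetP => y /imsetP [w /imsetP [c cC ->] ->].
rewrite hS addrA.
have : Phi c + s \in D by rewrite -hs; apply: imset_f; apply: imset_f.
rewrite -hz => /imsetP [c2 c2C ->].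
by rewrite -Phi_add //; apply: imset_f; apply: CD.
Qed.
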